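(* If $G$ is a $C$-group, then the profinite completion of $G$ is a profinite-$C$ group.
   Context: A permutable complement of a subgroup $H$ of a group $G$ is a subgroup $K$ with $G=HK$ and $H\cap K=1$. A group is a $C$-group if every subgroup has a permutable complement. A profinite group $G$ is a profinite-$C$ group if every closed subgroup of $G$ has a closed permutable complement in $G$. *)

(* Defs.v *)
(* abstract (possibly infinite) groups, given as a carrier with
   operations and axioms; the profinite completion is built concretely as the
   inverse limit of the finite quotients G/N, with elements represented as
   compatible families of cosets. *)
From Stdlib Require Import List.
Set Implicit Arguments.

(* An abstract group (left identity and left inverse axioms suffice). *)
Record group := Group {
  gcar :> Type;
  gmul : gcar -> gcar -> gcar;
  gone : gcar;
  ginv : gcar -> gcar;
  gmulA : forall x y z, gmul x (gmul y z) = gmul (gmul x y) z;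
  gmul1 : forall x, gmul gone x = x;
  gmulV : forall x, gmul (ginv x) x = gone
}.

Arguments gmul {g}.
Arguments gone {g}.
Arguments ginv {g}.

Section Discrete.
Context {G : group}.

Definition is_subgroup (S : G -> Prop) : Prop :=
  S gone /\ (forall x y, S x -> S y -> S (gmul x y)) /\
  (forall x, S x -> S (ginv x)).

Definition is_normal (S : G -> Prop) : Prop :=
  is_subgroup S /\ forall g x, S x -> S (gmul (gmul (ginv g) x) g).

Definition finite_index (S : G -> Prop) : Prop :=
  exists l : list G, forall x, exists g, In g l /\ S (gmul (ginv g) x).

Definition perm_complement (H K : G -> Prop) : Prop :=
  is_subgroup K /\
  (forall g, exists h k, H h /\ K k /\ g = gmul h k) /\
  (forall x, H x -> K x -> x = gone).

Definition C_group : Prop :=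
  forall H, is_subgroup H -> exists K, perm_complement H K.

End Discrete.

(* Normal subgroups of finite index: the index set of the inverse system. *)
Record fi_normal (G : group) := FiNormal {
  fiN :> G -> Prop;
  fiN_normal : is_normal fiN;
  fiN_index : finite_index fiN
}.

Section Completion.
Variable G : group.

(* a family assigning to each N a subset of G (intended: a coset of N) *)
Definition fam := fi_normal G -> G -> Prop.

Definition is_coset (N : G -> Prop) (C : G -> Prop) : Prop :=
  exists g, forall x, C x <-> N (gmul (ginv g) x).

Definition in_completion (f : fam) : Prop :=
  (forall N : fi_normal G, is_coset N (f N)) /\
  (forall M N : fi_normal G, (forall x, M x -> N x) ->
     forall x, f M x -> f N x).

(* group operations of the completion, computed coordinatewise in G/N
   (for normal N: (aN)(bN) = abN, (aN)^-1 = a^-1 N, identity N) *)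
Definition fam_mul (f g : fam) : fam :=
  fun N x => exists a b, f N a /\ g N b /\ x = gmul a b.
Definition fam_inv (f : fam) : fam := fun N x => f N (ginv x).
Definition fam_one : fam := fun N x => N x.

(* closedness for the profinite topology (product of discrete G/N restricted
   to the inverse limit): basic neighbourhoods of x are {y | y_N = x_N}. *)
Definition closed_in_completion (S : fam -> Prop) : Prop :=
  forall x, in_completion x -> ~ S x ->
    exists N : fi_normal G, forall y, in_completion y -> y N = x N -> ~ S y.

Definition closed_subgroup (S : fam -> Prop) : Prop :=
  (forall x, S x -> in_completion x) /\
  S fam_one /\
  (forall x y, S x -> S y -> S (fam_mul x y)) /\
  (forall x, S x -> S (fam_inv x)) /\
  closed_in_completion S.

Definition completion_is_profinite_C : Prop :=
  forall H, closed_subgroup H ->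
    exists K, closed_subgroup K /\
      (forall x, in_completion x -> exists h k, H h /\ K k /\ x = fam_mul h k) /\
      (forall x, H x -> K x -> x = fam_one).

End Completion.

(* Main.v *)
Require Import Defs.
From Stdlib Require Import List Classical FunctionalExtensionality PropExtensionality ClassicalEpsilon.
From mathcomp Require classical_sets.

Arguments gmulA {g}. Arguments gmul1 {g}. Arguments gmulV {g}.
Section GL.
Variable G : group.
Implicit Types x y z : G.

Lemma mulgV' x : gmul x (ginv x) = gone.
Proof.
assert (E : gmul (gmul x (ginv x)) (gmul x (ginv x)) = gmul x (ginv x)).
{ rewrite <- gmulA. rewrite (gmulA (ginv x) x). rewrite gmulV, gmul1. reflexivity. }
set (e := gmul x (ginv x)) in *.
transitivity (gmul (gmul (ginv e) e) e).
{ rewrite gmulV, gmul1. reflexivity. }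
rewrite <- gmulA, E, gmulV. reflexivity.
Qed.

Lemma mulg1' x : gmul x gone = x.
Proof. rewrite <- (gmulV x), gmulA, mulgV', gmul1. reflexivity. Qed.

Lemma mulKg' x y : gmul (ginv x) (gmul x y) = y.
Proof. rewrite gmulA, gmulV, gmul1. reflexivity. Qed.

Lemma mulKVg' x y : gmul x (gmul (ginv x) y) = y.
Proof. rewrite gmulA, mulgV', gmul1. reflexivity. Qed.

Lemma invgK' x : ginv (ginv x) = x.
Proof. rewrite <- (mulg1' (ginv (ginv x))), <- (gmulV x), gmulA, gmulV, gmul1. reflexivity. Qed.

Lemma invMg' x y : ginv (gmul x y) = gmul (ginv y) (ginv x).
Proof.
assert (E : gmul (gmul x y) (gmul (ginv y) (ginv x)) = gone).
{ rewrite <- gmulA, mulKVg', mulgV'. reflexivity. }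
rewrite <- (mulg1' (ginv (gmul x y))), <- E, gmulA, gmulV, gmul1. reflexivity.
Qed.

Lemma inv1' : ginv (@gone G) = gone.
Proof. rewrite <- (mulg1' (ginv gone)), gmulV. reflexivity. Qed.

End GL.
Arguments mulgV' {G}. Arguments mulg1' {G}. Arguments mulKg' {G}. Arguments mulKVg' {G}.
Arguments invgK' {G}. Arguments invMg' {G}. Arguments inv1' {G}.

Section Cos.
Variable G : group.
Implicit Types x y z a b c g : G.

Definition cos (N : G -> Prop) a : G -> Prop := fun g => N (gmul (ginv a) g).

Lemma sub_inv (S : G -> Prop) x : is_subgroup S -> S (ginv x) -> S x.
Proof. intros [_ [_ Hi]] H. rewrite <- (invgK' x). apply Hi, H. Qed.

Lemma sub_inv_swap (S : G -> Prop) a b : is_subgroup S -> S (gmul (ginv a) b) -> S (gmul (ginv b) a).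
Proof.
intros HS H. destruct HS as [H1 [Hm Hi]]. specialize (Hi _ H).
rewrite invMg', invgK' in Hi. exact Hi.
Qed.

Lemma sub_trans (S : G -> Prop) a b c : is_subgroup S -> S (gmul (ginv a) b) -> S (gmul (ginv b) c) -> S (gmul (ginv a) c).
Proof.
intros [H1 [Hm Hi]] H H'. specialize (Hm _ _ H H'). rewrite <- gmulA, mulKVg' in Hm. exact Hm.
Qed.

Lemma cos_eq (N : G -> Prop) a b : is_subgroup N -> N (gmul (ginv a) b) -> cos N a = cos N b.
Proof.
intros HN H. apply functional_extensionality; intro g. apply propositional_extensionality.
unfold cos. split; intro H'.
- apply (sub_trans _ _ a); auto. apply sub_inv_swap; auto.
- apply (sub_trans _ _ b); auto.
Qed.

Lemma cos_mem (N : G -> Prop) a : is_subgroup N -> cos N a a.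
Proof. intros [H1 _]. unfold cos. rewrite gmulV. exact H1. Qed.

Lemma cos_mem_eq (N : G -> Prop) a c : is_subgroup N -> cos N a c -> cos N a = cos N c.
Proof. intros HN H. apply cos_eq; auto. Qed.

Lemma normal_conj' (N : G -> Prop) g x : is_normal N -> N x -> N (gmul (gmul g x) (ginv g)).
Proof.
intros [_ Hn] H. specialize (Hn (ginv g) x H). rewrite invgK' in Hn. exact Hn.
Qed.

Lemma normal_swap (N : G -> Prop) a b : is_normal N -> N (gmul a b) -> N (gmul b a).
Proof.
intros HN H. pose proof (normal_conj' N b _ HN H) as H'.
rewrite (gmulA b a b), <- gmulA, mulgV', mulg1' in H'. exact H'.
Qed.

End Cos.

Arguments cos {G}. Arguments sub_inv {G}. Arguments sub_inv_swap {G}. Arguments sub_trans {G}. Arguments cos_eq {G}. Arguments cos_mem {G}. Arguments cos_mem_eq {G}. Arguments normal_conj' {G}. Arguments normal_swap {G}.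

Section Compl.
Variable G : group.
Implicit Types a b c g : G.
Implicit Types x y z h l k : fam G.

Lemma fam_ext x y : (forall N, x N = y N) -> x = y.
Proof. intro H. apply functional_extensionality. exact H. Qed.

Lemma rep x : in_completion x -> forall N, exists a, x N = cos N a.
Proof.
intros [Hc _] N. destruct (Hc N) as [a Ha]. exists a.
apply functional_extensionality; intro g. apply propositional_extensionality. apply Ha.
Qed.

Lemma sgN (N : fi_normal G) : is_subgroup N.
Proof. exact (proj1 (fiN_normal N)). Qed.

Lemma nN (N : fi_normal G) : is_normal N.
Proof. exact (fiN_normal N). Qed.

Lemma cos_mul x y (N : fi_normal G) a b : x N = cos N a -> y N = cos N b ->
  fam_mul x y N = cos N (gmul a b).
Proof.
intros Ha Hb. unfold fam_mul. rewrite Ha, Hb.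
apply functional_extensionality; intro g. apply propositional_extensionality. unfold cos. split.
- intros [a' [b' [Ha' [Hb' ->]]]].
  rewrite invMg'.
  pose proof (normal_conj' N (ginv b) _ (nN N) Ha') as H1. rewrite invgK' in H1.
  pose proof (proj1 (proj2 (sgN N)) _ _ H1 Hb') as H2.
  replace (gmul (gmul (ginv b) (ginv a)) (gmul a' b')) with
    (gmul (gmul (gmul (ginv b) (gmul (ginv a) a')) b) (gmul (ginv b) b')); [exact H2|].
  rewrite <- (gmulA _ b), mulKVg', <- !gmulA. reflexivity.
- intro H. exists a, (gmul (ginv a) g). split; [apply (cos_mem _ _ (sgN N))|]. split.
  + rewrite invMg', <- gmulA in H. exact H.
  + rewrite mulKVg'. reflexivity.
Qed.

Lemma cos_inv x (N : fi_normal G) a : x N = cos N a -> fam_inv x N = cos N (ginv a).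
Proof.
intros Ha. unfold fam_inv. rewrite Ha.
apply functional_extensionality; intro g. apply propositional_extensionality. unfold cos.
rewrite (invgK' a).
assert (E : ginv (gmul (ginv a) (ginv g)) = gmul g a) by (rewrite invMg', !invgK'; reflexivity).
split; intro H.
- pose proof (proj2 (proj2 (sgN N)) _ H) as H'. rewrite E in H'.
  exact (normal_swap N _ _ (nN N) H').
- apply (sub_inv N _ (sgN N)). rewrite E. exact (normal_swap N _ _ (nN N) H).
Qed.

Lemma cos_one (N : fi_normal G) : fam_one N = cos N gone.
Proof.
unfold fam_one, cos. apply functional_extensionality; intro g. rewrite inv1', gmul1. reflexivity.
Qed.

Lemma compl_mul x y : in_completion x -> in_completion y -> in_completion (fam_mul x y).
Proof.
intros Hx Hy. split.
- intro N. destruct (rep _ Hx N) as [a Ha]. destruct (rep _ Hy N) as [b Hb].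
  exists (gmul a b). rewrite (cos_mul _ _ _ _ _ Ha Hb). intro; unfold cos; tauto.
- intros M N HMN g [a [b [Ha [Hb ->]]]]. exists a, b. split; [|split; [|reflexivity]].
  + exact (proj2 Hx M N HMN _ Ha).
  + exact (proj2 Hy M N HMN _ Hb).
Qed.

Lemma compl_inv x : in_completion x -> in_completion (fam_inv x).
Proof.
intros Hx. split.
- intro N. destruct (rep _ Hx N) as [a Ha]. exists (ginv a). rewrite (cos_inv _ _ _ Ha). intro; unfold cos; tauto.
- intros M N HMN g H. exact (proj2 Hx M N HMN _ H).
Qed.

Lemma compl_one : in_completion (@fam_one G).
Proof.
split.
- intro N. exists gone. rewrite cos_one. intro; unfold cos; tauto.
- intros M N HMN g H. exact (HMN _ H).
Qed.

Lemma law1 h l k : in_completion h -> in_completion l -> in_completion k ->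
  fam_mul (fam_mul h l) (fam_mul (fam_inv l) k) = fam_mul h k.
Proof.
intros Hh Hl Hk. apply fam_ext; intro N.
destruct (rep _ Hh N) as [a Ha]. destruct (rep _ Hl N) as [b Hb]. destruct (rep _ Hk N) as [c Hc].
rewrite (cos_mul _ _ _ _ _ (cos_mul _ _ _ _ _ Ha Hb) (cos_mul _ _ _ _ _ (cos_inv _ _ _ Hb) Hc)).
rewrite (cos_mul _ _ _ _ _ Ha Hc). rewrite <- gmulA, mulKVg'. reflexivity.
Qed.

Lemma law_one x : in_completion x -> fam_mul (@fam_one G) x = x.
Proof.
intros Hx. apply fam_ext; intro N. destruct (rep _ Hx N) as [a Ha].
rewrite (cos_mul _ _ _ _ _ (cos_one N) Ha), gmul1. symmetry; exact Ha.
Qed.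

Lemma law_cancel y x : in_completion y -> in_completion x ->
  fam_mul y (fam_mul (fam_inv y) x) = x.
Proof.
intros Hy Hx. apply fam_ext; intro N. destruct (rep _ Hx N) as [a Ha]. destruct (rep _ Hy N) as [b Hb].
rewrite (cos_mul _ _ _ _ _ Hb (cos_mul _ _ _ _ _ (cos_inv _ _ _ Hb) Ha)), mulKVg'. symmetry; exact Ha.
Qed.

Lemma law_cancel' y x : in_completion y -> in_completion x ->
  fam_mul (fam_inv y) (fam_mul y x) = x.
Proof.
intros Hy Hx. apply fam_ext; intro N. destruct (rep _ Hx N) as [a Ha]. destruct (rep _ Hy N) as [b Hb].
rewrite (cos_mul _ _ _ _ _ (cos_inv _ _ _ Hb) (cos_mul _ _ _ _ _ Hb Ha)), mulKg'. symmetry; exact Ha.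
Qed.

Lemma mem_cos x (N : fi_normal G) c : in_completion x -> x N c -> x N = cos N c.
Proof.
intros Hx H. destruct (rep _ Hx N) as [a Ha]. rewrite Ha in *. apply cos_mem_eq; auto. apply sgN.
Qed.

End Compl.
Lemma zorn_plain (T:Type) (P : (T->Prop)->Prop) :
  (forall F : (T->Prop)->Prop, (forall X, F X -> P X) ->
     (forall X Y, F X -> F Y -> (forall t, X t -> Y t) \/ (forall t, Y t -> X t)) ->
     P (fun t => exists X, F X /\ X t)) ->
  exists A, P A /\ forall B, (forall t, A t -> B t) -> (exists t, B t /\ ~ A t) -> ~ P B.
Proof.
intros H.
destruct (@classical_sets.Zorn_bigcup T P) as [A [PA HA]].
- intros F FP tot.
  assert (E : classical_sets.bigcup F (fun X => X) = (fun t => exists X, F X /\ X t)).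
  { apply functional_extensionality; intro t. apply propositional_extensionality. split.
    - intros [X FX Xt]. exists X. split; assumption.
    - intros [X [FX Xt]]. exists X; assumption. }
  rewrite E. apply H. exact FP. intros X Y FX FY. destruct (tot X Y FX FY); auto.
- exists A. split. exact PA. intros B AB [t [Bt nAt]] PB. apply (HA B). split. exact AB.
  intros BA. apply nAt. apply BA. exact Bt. exact PB.
Qed.

Section Compact.
Variable G : group.

Definition fipP (U : (fam G -> Prop) -> Prop) :=
  forall l : list (fam G -> Prop), (forall A, In A l -> U A) ->
    exists y, in_completion y /\ forall A, In A l -> A y.

Lemma fip_mono (U1 U2 : (fam G -> Prop) -> Prop) :
  (forall B, U1 B -> U2 B) -> fipP U2 -> fipP U1.
Proof. intros H F l Hl. apply F. intros A HA. apply H, Hl, HA. Qed.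

Lemma list_split (U : (fam G -> Prop) -> Prop) V l' :
  (forall B, In B l' -> U B \/ B = V) ->
  exists l, (forall B, In B l -> U B) /\ forall B, In B l' -> In B l \/ B = V.
Proof.
induction l' as [|B l' IH]; intros H.
- exists nil. split; intros B []; fail.
- destruct IH as [l [H1 H2]]. { intros; apply H; right; auto. }
  destruct (H B (or_introl eq_refl)) as [HB|HB].
  + exists (B :: l). split.
    * intros B' [<-|HB']; auto.
    * intros B' [<-|HB']; [left; left; auto|]. destruct (H2 _ HB'); auto. left; right; auto.
  + exists l. split; auto. intros B' [<-|HB']; auto.
Qed.

Lemma negfip (U : (fam G -> Prop) -> Prop) V :
  ~ fipP (fun B => U B \/ B = V) ->
  exists l, (forall B, In B l -> U B) /\
    forall y, in_completion y -> (forall B, In B l -> B y) -> ~ V y.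
Proof.
intros H. apply NNPP. intro H'. apply H. intros l' Hl'.
destruct (list_split U V l' Hl') as [l [H1 H2]].
apply NNPP. intro H3. apply H'. exists l. split; auto.
intros y Hy Hall HV. apply H3. exists y. split; auto.
intros A HA. destruct (H2 _ HA) as [HA'|HA']; [exact (Hall A HA')|subst; auto].
Qed.

Lemma compact (I : Type) (S : I -> fam G -> Prop) :
  (forall i, closed_in_completion (S i)) ->
  (forall li : list I, exists y, in_completion y /\ forall i, In i li -> S i y) ->
  exists x, in_completion x /\ forall i, S i x.
Proof.
intros Hcl Hfip.
set (Sf := fun A : fam G -> Prop => exists i, A = S i).
assert (HSf : fipP Sf).
{ intros l Hl.
  assert (E : exists li, forall A, In A l -> exists i, In i li /\ A = S i).
  { clear -Hl. induction l as [|A l IH].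
    - exists nil. intros A [].
    - destruct IH as [li Hli]. { intros; apply Hl; right; auto. }
      destruct (Hl A (or_introl eq_refl)) as [i Hi].
      exists (i :: li). intros A' [<-|HA'].
      + exists i; split; auto. left; auto.
      + destruct (Hli _ HA') as [j [Hj Ej]]. exists j; split; [right; auto|exact Ej]. }
  destruct E as [li Hli]. destruct (Hfip li) as [y [Hy Hy']].
  exists y. split; auto. intros A HA. destruct (Hli _ HA) as [i [Hi Ei]]. rewrite Ei. auto. }
destruct (zorn_plain (fam G -> Prop) (fun A => fipP (fun B => A B \/ Sf B))) as [A [PA HA]].
{ intros F FP tot.
  assert (CL : forall l, (forall B, In B l -> (exists X, F X /\ X B) \/ Sf B) ->
     (forall B, In B l -> Sf B) \/ exists X, F X /\ forall B, In B l -> X B \/ Sf B).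
  { induction l as [|B l IH]; intros Hl.
    - left. intros B [].
    - destruct IH as [IH|[X [FX HX]]]. { intros; apply Hl; right; auto. }
      + destruct (Hl B (or_introl eq_refl)) as [[X [FX XB]]|SB].
        * right. exists X. split; auto. intros B' [<-|HB']; auto.
        * left. intros B' [<-|HB']; auto.
      + destruct (Hl B (or_introl eq_refl)) as [[Y [FY YB]]|SB].
        * destruct (tot X Y FX FY) as [XY|YX].
          -- right. exists Y. split; auto. intros B' [<-|HB']; auto.
             destruct (HX _ HB'); auto.
          -- right. exists X. split; auto. intros B' [<-|HB']; auto.
        * right. exists X. split; auto. intros B' [<-|HB']; auto. }
  intros l Hl. destruct (CL l Hl) as [H1|[X [FX HX]]].
  - apply HSf. exact H1.
  - apply (FP X FX). exact HX. }
set (U := fun B => A B \/ Sf B).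
assert (Hmax : forall V, fipP (fun B => U B \/ B = V) -> U V).
{ intros V HV. apply NNPP. intro nUV. apply (HA (fun B => A B \/ B = V)).
  - intros; left; auto.
  - exists V. split; auto. intro AV. apply nUV. left; auto.
  - eapply fip_mono; [|exact HV]. unfold U. intros B [[HB|HB]|HB]; auto. }
assert (Hc : forall N : fi_normal G, exists g, U (fun y => y N g)).
{ intro N. apply NNPP. intro Hn.
  assert (Hn' : forall g, exists l, (forall B, In B l -> U B) /\
      forall y, in_completion y -> (forall B, In B l -> B y) -> ~ y N g).
  { intro g. apply negfip. intro F. apply Hn. exists g. apply Hmax, F. }
  destruct (fiN_index N) as [L HL].
  assert (E : exists l, (forall B, In B l -> U B) /\
      forall y, in_completion y -> (forall B, In B l -> B y) -> forall g, In g L -> ~ y N g).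
  { clear HL. induction L as [|g L IH].
    - exists nil. split. intros B []. intros y _ _ g [].
    - destruct IH as [l [H1 H2]]. destruct (Hn' g) as [l' [H1' H2']].
      exists (l' ++ l). split.
      + intros B HB. apply in_app_or in HB. destruct HB; auto.
      + intros y Hy Hall g' [<-|Hg'].
        * apply H2'; auto. intros; apply Hall, in_or_app; auto.
        * apply H2; auto. intros; apply Hall, in_or_app; auto. }
  destruct E as [l [H1 H2]]. destruct (PA l H1) as [y [Hy Hall]].
  destruct (rep _ _ Hy N) as [a Ha]. destruct (HL a) as [g [Hg HNg]].
  apply (H2 y Hy Hall g Hg). rewrite Ha. unfold cos. apply sub_inv_swap; auto. apply sgN. }
set (r := fun N => proj1_sig (constructive_indefinite_description _ (Hc N))).
assert (Hr : forall N, U (fun y => y N (r N))).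
{ intro N. exact (proj2_sig (constructive_indefinite_description _ (Hc N))). }
assert (two : forall B1 B2, U B1 -> U B2 -> exists y, in_completion y /\ B1 y /\ B2 y).
{ intros B1 B2 H1 H2. destruct (PA (B1 :: B2 :: nil)) as [y [Hy Hall]].
  - intros B [<-|[<-|[]]]; auto.
  - exists y. split; auto. split; apply Hall; simpl; auto. }
set (x := fun N : fi_normal G => cos N (r N)).
assert (Hx : in_completion x).
{ split.
  - intro N. exists (r N). intro; unfold x, cos; tauto.
  - intros M N HMN g Hg.
    destruct (two _ _ (Hr M) (Hr N)) as [y [Hy [HyM HyN]]].
    unfold x. rewrite <- (mem_cos _ _ _ _ Hy HyN). apply (proj2 Hy M N HMN).
    rewrite (mem_cos _ _ _ _ Hy HyM). exact Hg. }
exists x. split; auto.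
intro i. apply NNPP. intro Hn. destruct (Hcl i x Hx Hn) as [N HN].
assert (Ui : U (S i)) by (right; exists i; reflexivity).
destruct (two _ _ Ui (Hr N)) as [y [Hy [Hyi HyN]]].
apply (HN y Hy); auto. rewrite (mem_cos _ _ _ _ Hy HyN). reflexivity.
Qed.

End Compact.

Lemma coord_inv_mul (G : group) (y y' x : fam G) (N : fi_normal G) :
  y' N = y N -> fam_mul (fam_inv y') x N = fam_mul (fam_inv y) x N.
Proof. intro E. unfold fam_mul, fam_inv. rewrite E. reflexivity. Qed.

Section Main.
Variable G : group.
Variable H : fam G -> Prop.
Hypothesis HH : closed_subgroup H.

Definition KY (Y : fam G -> Prop) := fun x => in_completion x /\ ~ Y x.
Definition PY (Y : fam G -> Prop) := closed_subgroup (KY Y) /\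
  (forall x, in_completion x -> exists h k, H h /\ KY Y k /\ x = fam_mul h k).

Lemma PY_chain (F : (fam G -> Prop) -> Prop) :
  (forall X, F X -> PY X) ->
  (forall X Y, F X -> F Y -> (forall t, X t -> Y t) \/ (forall t, Y t -> X t)) ->
  PY (fun t => exists X, F X /\ X t).
Proof.
intros FP tot. destruct HH as [Hsub [H1 [Hmul [Hinv Hcl]]]].
split; [split; [|split; [|split; [|split]]]|].
- intros x [Hx _]; exact Hx.
- split; [apply compl_one|]. intros [X [FX HX]].
  destruct (FP X FX) as [[_ [[_ n] _]] _]. exact (n HX).
- intros x y [Hx nx] [Hy ny]. split; [apply compl_mul; auto|]. intros [X [FX HX]].
  destruct (FP X FX) as [[_ [_ [m _]]] _].
  refine (proj2 (m x y _ _) HX).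
  + split; auto. intro; apply nx; exists X; auto.
  + split; auto. intro; apply ny; exists X; auto.
- intros x [Hx nx]. split; [apply compl_inv; auto|]. intros [X [FX HX]].
  destruct (FP X FX) as [[_ [_ [_ [i _]]]] _].
  refine (proj2 (i x _) HX).
  split; auto. intro; apply nx; exists X; auto.
- intros x Hx nK. assert (Yx : exists X, F X /\ X x).
  { apply NNPP. intro n. apply nK. split; auto. }
  destruct Yx as [X [FX HX]].
  destruct (FP X FX) as [[_ [_ [_ [_ cl]]]] _].
  destruct (cl x Hx (fun h => proj2 h HX)) as [N HN].
  exists N. intros y Hy E [_ ny]. apply (HN y Hy E). split; auto.
  intro; apply ny; exists X; auto.
- intros x Hx.
  destruct (classic (exists X, F X)) as [[X0 FX0]|nF].
  2:{ exists (@fam_one G), x. split; auto. split; [split; auto|].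
      - intros [X [FX _]]. apply nF; exists X; auto.
      - symmetry; apply law_one; auto. }
  set (I := {X | F X}).
  set (S := fun (i : I) y => H y /\ KY (proj1_sig i) (fam_mul (fam_inv y) x)).
  destruct (compact G I S) as [y [Hy Sy]].
  + intros i y Hy nS.
    destruct (classic (H y)) as [Hhy|nHy].
    * assert (nK : ~ KY (proj1_sig i) (fam_mul (fam_inv y) x)) by (intro; apply nS; split; auto).
      destruct (FP _ (proj2_sig i)) as [[_ [_ [_ [_ cl]]]] _].
      destruct (cl _ (compl_mul _ _ _ (compl_inv _ _ Hy) Hx) nK) as [N HN].
      exists N. intros y' Hy' E [_ K']. apply (HN _ (compl_mul _ _ _ (compl_inv _ _ Hy') Hx)); auto.
      apply coord_inv_mul; auto.
    * destruct (Hcl y Hy nHy) as [N HN]. exists N. intros y' Hy' E [Hh _]. exact (HN y' Hy' E Hh).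
  + intros li.
    assert (CL : (forall i, In i li -> False) \/
       exists X0, F X0 /\ forall i, In i li -> forall t, proj1_sig i t -> X0 t).
    { induction li as [|i li IH].
      - left; intros i [].
      - destruct IH as [IH|[X1 [FX1 HX1]]].
        + right. exists (proj1_sig i). split; [exact (proj2_sig i)|].
          intros j [E|Hj]; [subst; auto|destruct (IH _ Hj)].
        + destruct (tot _ _ FX1 (proj2_sig i)) as [XY|YX].
          * right. exists (proj1_sig i). split; [exact (proj2_sig i)|].
            intros j [E|Hj]; [subst; auto|]. intros t Ht; apply XY, (HX1 j Hj t Ht).
          * right. exists X1. split; auto.
            intros j [E|Hj]; [subst; auto|]. exact (HX1 j Hj). }
    destruct CL as [E|[X1 [FX1 HX1]]].
    * exists (@fam_one G). split; [apply compl_one|]. intros i Hi; destruct (E i Hi).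
    * destruct (proj2 (FP X1 FX1) x Hx) as [h [k [Hh [[Hk nk] ->]]]].
      exists h. split; [exact (Hsub h Hh)|]. intros i Hi. split; auto.
      rewrite law_cancel'; auto.
      split; auto. intro Xk. apply nk. exact (HX1 i Hi k Xk).
  + exists y, (fam_mul (fam_inv y) x). split; [exact (proj1 (Sy (exist _ X0 FX0)))|].
    split.
    * split; [apply compl_mul; auto; apply compl_inv; auto|].
      intros [X [FX HX]]. exact (proj2 (proj2 (Sy (exist _ X FX))) HX).
    * symmetry; apply law_cancel; auto.
Qed.

End Main.

Theorem corollary2p5 (G : group) :
  @C_group G -> completion_is_profinite_C G.
Proof.
intros HC H HH.
destruct (zorn_plain (fam G) (PY G H)) as [A [PA HA]].
{ intros F FP tot. apply PY_chain; auto. }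
set (K := KY G A).
destruct PA as [KS Kdec].
assert (Kmin : forall X, closed_subgroup X -> (forall x, X x -> K x) ->
   (forall x, in_completion x -> exists h k, H h /\ X k /\ x = fam_mul h k) ->
   forall x, K x -> X x).
{ intros X XS XK Xdec x Kx. apply NNPP. intro nX.
  apply (HA (fun t => ~ X t)).
  - intros t At Xt. destruct (XK t Xt) as [_ nA]. exact (nA At).
  - exists x. split; auto. destruct Kx as [_ nA]. exact nA.
  - assert (E : KY G (fun t => ~ X t) = X).
    { apply functional_extensionality; intro t. apply propositional_extensionality.
      split.
      - intros [_ nn]. apply NNPP; exact nn.
      - intro Xt. split; [exact (proj1 XS t Xt)|]. intro n; exact (n Xt). }
    unfold PY. rewrite E. split; auto. }
destruct HH as [Hsub [H1 [Hmul [Hinv Hcl]]]].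
destruct KS as [Ksub [K1 [Kmul [Kinv Kcl]]]].
exists K. split; [split; [|split; [|split; [|split]]]; auto|]. split; auto.
intros z Hz Kz. apply NNPP. intro nz.
assert (EN : exists N : fi_normal G, z N <> fam_one N).
{ apply NNPP. intro n. apply nz. apply fam_ext. intro N. apply NNPP. intro n'. apply n. exists N. exact n'. }
destruct EN as [N HN].
assert (Gz : in_completion z) by (apply Hsub; auto).
destruct (rep _ _ Gz N) as [g Hg].
assert (nNg : ~ N g).
{ intro Ng. apply HN. rewrite Hg. transitivity (cos N gone); [|symmetry; apply (cos_one G N)]. apply cos_eq; [apply sgN|].
  rewrite mulg1'. apply (proj2 (proj2 (sgN G N))). exact Ng. }
set (Lt := fun a : G => exists l, H l /\ K l /\ l N a).
assert (Lsub : is_subgroup Lt).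
{ split; [|split].
  - exists (@fam_one G). refine (conj H1 (conj K1 _)). exact (proj1 (sgN G N)).
  - intros a b [l1 [Hl1 [Kl1 L1]]] [l2 [Hl2 [Kl2 L2]]]. exists (fam_mul l1 l2).
    refine (conj (Hmul _ _ Hl1 Hl2) (conj (Kmul _ _ Kl1 Kl2) _)). exists a, b. auto.
  - intros a [l [Hl [Kl La]]]. exists (fam_inv l). refine (conj (Hinv _ Hl) (conj (Kinv _ Kl) _)).
    unfold fam_inv. rewrite invgK'. exact La. }
destruct (HC Lt Lsub) as [Cc [Csub [Cdec Cint]]].
set (X := fun k => K k /\ exists c, Cc c /\ k N c).
assert (XS : closed_subgroup X).
{ split; [|split; [|split; [|split]]].
  - intros x [Kx _]. apply Ksub; auto.
  - refine (conj K1 _). exists gone. split; [exact (proj1 Csub)|exact (proj1 (sgN G N))].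
  - intros x y [Kx [c1 [C1 X1]]] [Ky [c2 [C2 X2]]]. refine (conj (Kmul _ _ Kx Ky) _).
    exists (gmul c1 c2). split; [apply (proj1 (proj2 Csub)); auto|]. exists c1, c2. auto.
  - intros x [Kx [c [Cc' Xc]]]. refine (conj (Kinv _ Kx) _). exists (ginv c). split; [apply (proj2 (proj2 Csub)); auto|].
    unfold fam_inv. rewrite invgK'. exact Xc.
  - intros x Gx nX. destruct (classic (K x)) as [Kx|nKx].
    + exists N. intros y Gy E [Ky [c [Cy Yc]]]. apply nX. refine (conj Kx _). exists c. split; auto.
      rewrite <- E; exact Yc.
    + destruct (Kcl x Gx nKx) as [N' HN']. exists N'. intros y Gy E [Ky _]. exact (HN' y Gy E Ky). }
assert (XK : forall x, X x -> K x) by (intros x [Kx _]; exact Kx).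
assert (Xdec : forall x, in_completion x -> exists h k, H h /\ X k /\ x = fam_mul h k).
{ intros x Gx. destruct (Kdec x Gx) as [h [k [Hh [Kk E]]]].
  assert (Gk : in_completion k) by (apply Ksub; auto).
  destruct (rep _ _ Gk N) as [a Ha].
  destruct (Cdec a) as [l [c [Ll [Cc' Eac]]]].
  destruct Ll as [l' [Hl' [Kl' L']]].
  exists (fam_mul h l'), (fam_mul (fam_inv l') k). refine (conj (Hmul _ _ Hh Hl') (conj _ _)).
  - refine (conj (Kmul _ _ (Kinv _ Kl') Kk) _). exists c. refine (conj Cc' _). exists (ginv l), a. split; [|split].
    + unfold fam_inv. rewrite invgK'. exact L'.
    + rewrite Ha. apply cos_mem, sgN.
    + rewrite Eac, mulKg'. reflexivity.
  - rewrite E. symmetry. apply law1; auto. }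
destruct (Kmin X XS XK Xdec z Kz) as [_ [c [Cc' Zc]]].
assert (c1 : c = gone) by (apply Cint; auto; exists z; auto).
rewrite c1, Hg in Zc. unfold cos in Zc. rewrite mulg1' in Zc.
apply nNg. apply (sub_inv N g (sgN G N)). exact Zc.
Qed.
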